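(* Every induced subcomplex of a unimodular simplicial complex is unimodular.
   Context: A simplicial complex on a finite ground set $V$ is a family of subsets of $V$ closed under subsets; facets are inclusion-maximal faces. For $W\subseteq V$ the induced subcomplex is $\{F\in\mathcal{C}:F\subseteq W\}$ on ground set $W$. $\mathcal{A}_{\mathcal{C}}$ is the $0/1$ matrix with columns indexed by $\mathbf{i}\in\{1,2\}^V$ and rows indexed by pairs $(F,\mathbf{e})$, $F$ a facet, $\mathbf{e}\in\{1,2\}^F$; entry $1$ iff $\mathbf{e}=\mathbf{i}|_F$. An integer matrix is unimodular if every circuit (nonzero integer kernel vector with coprime entries and inclusion-minimal support) has entries in $\{0,\pm1\}$; $\mathcal{C}$ is unimodular if $\mathcal{A}_{\mathcal{C}}$ is. *)

(* Defs.v *)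
From mathcomp Require Import all_boot all_order all_algebra.
Set Implicit Arguments. Unset Strict Implicit. Unset Printing Implicit Defensive.
Import Order.TTheory GRing.Theory Num.Theory.
Local Open Scope ring_scope.

Definition simplicial_complex (V : finType) (C : {set {set V}}) : Prop :=
  forall F G : {set V}, F \in C -> G \subset F -> G \in C.

Definition facet (V : finType) (C : {set {set V}}) (F : {set V}) : bool :=
  (F \in C) && [forall G in C, (F \subset G) ==> (G == F)].

Definition ground (V : finType) (W : {set V}) : finType := {x : V | x \in W}.

Definition induced (V : finType) (C : {set {set V}}) (W : {set V})
  : {set {set ground W}} :=
  [set [set x : ground W | val x \in F] | F : {set V} in C & F \subset W].

(* Encoding of {1,2}: a vector i in {1,2}^V is encoded by the set
   {v | i_v = 2}; a vector e in {1,2}^F (F a facet) by the subset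
   {v in F | e_v = 2} of F.  Then e = i|_F  iff  i :&: F = e. *)
Definition row_index (V : finType) (C : {set {set V}}) :=
  {p : {set V} * {set V} | facet C p.1 && (p.2 \subset p.1)}.

Definition A_mat (V : finType) (C : {set {set V}})
  (r : row_index C) (i : {set V}) : int :=
  if i :&: (val r).1 == (val r).2 then 1 else 0.

Section Unimod.
Variables (Rw Cl : finType) (A : Rw -> Cl -> int).

Definition in_kernel (x : {ffun Cl -> int}) : bool :=
  [forall r, \sum_(c : Cl) A r c * x c == 0].

Definition supp (x : {ffun Cl -> int}) : {set Cl} := [set c | x c != 0].

Definition circuit (x : {ffun Cl -> int}) : Prop :=
  [/\ in_kernel x, x != 0,
      \big[gcdn/0%N]_(c : Cl) `|x c|%N = 1%N &
      forall y : {ffun Cl -> int}, in_kernel y -> y != 0 ->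
        supp y \subset supp x -> supp y = supp x].

Definition unimodular_mat : Prop :=
  forall x, circuit x -> forall c, x c \in [:: 0; 1; -1].
End Unimod.

Definition unimodular_complex (V : finType) (C : {set {set V}}) : Prop :=
  @unimodular_mat (row_index C) {set V} (@A_mat V C).

(* Main.v *)
Require Import Defs.
From mathcomp Require Import all_boot all_order all_algebra.
Set Implicit Arguments. Unset Strict Implicit. Unset Printing Implicit Defensive.
Import Order.TTheory GRing.Theory Num.Theory.

Section Aux.
Local Open Scope ring_scope.

Lemma marg (U : finType) (z : {set U} -> int) (G H e : {set U}) :
  G \subset H -> (forall e', \sum_(i | i :&: H == e') z i = 0) ->
  \sum_(i | i :&: G == e) z i = 0.
Proof.
move=> sGH hH.
rewrite (partition_big (fun i => i :&: H) (fun j => j :&: G == e)); last first.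
  by move=> i /eqP <-; rewrite -setIA (setIidPr sGH).
apply: big1 => j /eqP hj.
rewrite -[RHS](hH j); apply: eq_bigl => i.
case: (eqVneq (i :&: H) j) => [hij|]; last by rewrite andbF.
by rewrite andbT -hj -hij -setIA (setIidPr sGH) eqxx.
Qed.

Lemma exists_facet (U : finType) (D : {set {set U}}) (S : {set U}) :
  S \in D -> exists2 F, facet D F & S \subset F.
Proof.
move=> SD.
have P0 : (fun F : {set U} => (F \in D) && (S \subset F)) S by rewrite SD subxx.
case: (@arg_maxnP _ S (fun F : {set U} => (F \in D) && (S \subset F)) (fun F : {set U} => #|F|) P0) => F /andP[FD sSF] Fmax.
exists F => //; rewrite /facet FD /=; apply/forallP => G; apply/implyP => GD.
apply/implyP => sFG.
have := Fmax G; rewrite GD (subset_trans sSF sFG) => /(_ isT) cGF.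
by rewrite eq_sym eqEcard sFG; exact: cGF.
Qed.

Lemma AE (U : finType) (D : {set {set U}}) (r : row_index D) (i : {set U}) (a : int) :
  A_mat r i * a = if i :&: (val r).1 == (val r).2 then a else 0.
Proof. by rewrite /A_mat; case: ifP => _; rewrite ?mul1r ?mul0r. Qed.

Lemma kernel_rows (U : finType) (D : {set {set U}}) (x : {ffun {set U} -> int}) :
  in_kernel (@A_mat U D) x -> forall G e, facet D G ->
  \sum_(j | j :&: G == e) x j = 0.
Proof.
move=> /forallP hk G e fG.
case sEG: (e \subset G); last first.
  rewrite big_pred0 // => j; apply/negP => /eqP hj.
  by move: sEG; rewrite -hj subsetIr.
have Hr : facet D (G, e).1 && ((G, e).2 \subset (G, e).1) by rewrite /= fG sEG.
move/eqP: (hk (exist _ (G, e) Hr)) => h0.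
rewrite -[RHS]h0 big_mkcond; under [RHS]eq_bigr do rewrite AE. by [].
Qed.

Lemma kernel_of_rows (U : finType) (D : {set {set U}}) (x : {ffun {set U} -> int}) :
  (forall G e, facet D G -> \sum_(j | j :&: G == e) x j = 0) ->
  in_kernel (@A_mat U D) x.
Proof.
move=> h; apply/forallP => r; apply/eqP.
under eq_bigr do rewrite AE.
rewrite -big_mkcond /=; apply: h.
by case: r => [[G e] /= /andP[]].
Qed.
End Aux.

Section Emb.
Variables (V : finType) (W : {set V}).
Definition emb (j : {set ground W}) : {set V} := [set val x | x in j].
Definition res (T : {set V}) : {set ground W} := [set x : ground W | val x \in T].

Lemma emb_sub j : emb j \subset W.
Proof. by apply/subsetP => v /imsetP[x _ ->]; exact: (valP x). Qed.

Lemma embK j : res (emb j) = j.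
Proof.
apply/setP => x; rewrite inE; apply/imsetP/idP => [[y yj /val_inj ->]|] //.
by move=> xj; exists x.
Qed.

Lemma resK (T : {set V}) : T \subset W -> emb (res T) = T.
Proof.
move=> sTW; apply/setP => v; apply/imsetP/idP => [[y]|vT].
  by rewrite inE => yT ->.
have vW : v \in W by apply: (subsetP sTW).
by exists (exist _ v vW); rewrite ?inE.
Qed.

Lemma emb_inj : injective emb.
Proof. by move=> a b h; rewrite -(embK a) h embK. Qed.

Lemma embI a b : emb (a :&: b) = emb a :&: emb b.
Proof. by rewrite /emb imsetI // => x y _ _; exact: val_inj. Qed.

Lemma emb_subset a b : (emb a \subset emb b) = (a \subset b).
Proof.
apply/idP/idP => h; last exact: imsetS.
by rewrite -(embK a) -(embK b); apply/subsetP => x; rewrite !inE => /(subsetP h).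
Qed.

Lemma big_emb (R : Type) (idx : R) (op : Monoid.com_law idx) (f : {set V} -> R) :
  (forall c : {set V}, ~~ (c \subset W) -> f c = idx) ->
  \big[op/idx]_(c : {set V}) f c = \big[op/idx]_(j : {set ground W}) f (emb j).
Proof.
move=> h0; rewrite (bigID (fun c : {set V} => c \subset W)) /=.
rewrite [X in op _ X]big1 ?Monoid.mulm1; last by move=> c /h0.
rewrite (reindex_onto emb res) /=; last by move=> c; apply: resK.
by apply: eq_bigl => j; rewrite emb_sub embK eqxx.
Qed.
End Emb.

Section Main.
Local Open Scope ring_scope.
Variables (V : finType) (C : {set {set V}}) (W : {set V}).

Lemma restrict_kernel (z : {ffun {set V} -> int}) :
  in_kernel (@A_mat V C) z -> (forall c, z c != 0 -> c \subset W) ->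
  in_kernel (@A_mat _ (induced C W)) [ffun j => z (emb j)].
Proof.
move=> zk zW; apply: kernel_of_rows => G e fG.
transitivity (\sum_(c | c :&: emb G == emb e) z c).
  symmetry; rewrite big_mkcond (@big_emb _ W) /=; last first.
    move=> c ncW; case: ifP => // _; apply/eqP; apply: contraNT ncW; exact: zW.
  rewrite [RHS]big_mkcond; apply: eq_bigr => j _.
  by rewrite -embI (inj_eq (@emb_inj _ _)) ffunE.
case/andP: fG => /imsetP[F]; rewrite inE => /andP[FC FW] defG _.
have eG : emb G = F by rewrite defG; exact: resK.
have GC : emb G \in C by rewrite eG.
have [F' fF' sF] := exists_facet GC.
apply: (@marg _ (fun c => z c) _ _ _ sF) => e'; exact: (kernel_rows zk e' fF').
Qed.

Lemma lift_kernel (x : {ffun {set ground W} -> int}) :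
  simplicial_complex C -> in_kernel (@A_mat _ (induced C W)) x ->
  in_kernel (@A_mat V C) [ffun c : {set V} => if c \subset W then x (res W c) else 0].
Proof.
move=> sC xk; apply: kernel_of_rows => F e fF.
set y := [ffun c => _].
transitivity (\sum_(c | c :&: (F :&: W) == e) y c).
  rewrite big_mkcond [RHS]big_mkcond; apply: eq_bigr => c _.
  rewrite /y ffunE; case: (boolP (c \subset W)) => cW; last by rewrite !if_same.
  by rewrite setIA (setIidPl (subset_trans (subsetIl c F) cW)).
have FC : F \in C by case/andP: fF.
have FWC : F :&: W \in C by apply: sC FC (subsetIl F W).
have rI : res W (F :&: W) \in induced C W.
  by apply/imsetP; exists (F :&: W) => //; rewrite inE FWC subsetIr.
have [Gf fGf sG] := exists_facet rI.
have sFG : F :&: W \subset emb Gf by rewrite -(resK (subsetIr F W)) emb_subset.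
apply: (@marg _ (fun c => y c) _ _ _ sFG) => e'.
rewrite big_mkcond (@big_emb _ W) /=; last first.
  by move=> c ncW; rewrite ffunE (negbTE ncW) if_same.
under eq_bigr do rewrite ffunE emb_sub embK -embI.
case: (boolP (e' \subset W)) => e'W.
  rewrite -(resK e'W); under eq_bigr do rewrite (inj_eq (@emb_inj _ _)).
  rewrite -big_mkcond; exact: (kernel_rows xk (res W e') fGf).
apply: big1 => j _; case: eqP => // h; case/negP: e'W; rewrite -h; exact: emb_sub.
Qed.
End Main.

Theorem proposition3p1 (V : finType) (C : {set {set V}}) (W : {set V}) :
  simplicial_complex C -> unimodular_complex C ->
  unimodular_complex (induced C W).
Proof.
move=> sC uC x [xk x0 xg xmin] c.
set y := [ffun c : {set V} => if c \subset W then x (res W c) else 0].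
have yk : in_kernel (@A_mat V C) y by exact: lift_kernel.
have yE : forall j, y (emb j) = x j by move=> j; rewrite /y ffunE emb_sub embK.
have yW : forall c, y c != 0 -> c \subset W.
  by move=> c'; rewrite /y ffunE; case: ifP => //; rewrite eqxx.
have ycirc : circuit (@A_mat V C) y.
  split => //.
  - apply/eqP => y0; move/eqP: x0; apply; apply/ffunP => j.
    by rewrite -yE y0 !ffunE.
  - rewrite (@big_emb _ W) /=; last by move=> c' nc; rewrite /y ffunE (negbTE nc).
    by under eq_bigr do rewrite yE.
  move=> z zk z0 szy.
  have zW : forall c, z c != 0 -> c \subset W.
    by move=> c' nz; apply: yW; have := subsetP szy c'; rewrite !inE; apply.
  have z'0 : [ffun j => z (emb j)] != 0%R :> {ffun {set ground W} -> int}.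
    apply/negP => /eqP z'0; move/eqP: z0; apply; apply/ffunP => c'.
    rewrite ffunE; case: (eqVneq (z c') 0) => // nz.
    have cW := zW _ nz; have := congr1 (fun f : {ffun {set ground W} -> int} => f (res W c')) z'0.
    by rewrite !ffunE resK.
  have sz' : supp [ffun j => z (emb j)] \subset supp x.
    apply/subsetP => j; rewrite !inE ffunE => nz.
    by have := subsetP szy (emb j); rewrite !inE yE; apply.
  have hsupp := xmin _ (restrict_kernel zk zW) z'0 sz'.
  apply/eqP; rewrite eqEsubset szy; apply/subsetP => c'; rewrite !inE => nz.
  have cW := yW _ nz; move: nz; rewrite -(resK cW) yE => nz.
  have : res W c' \in supp x by rewrite inE.
  by rewrite -hsupp inE ffunE.
by have := uC y ycirc (emb c); rewrite yE.
Qed.
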